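(* Under the standing assumptions, if $1/4<a<b/27+1/3$ and $\theta\in(\pi/2,\pi)$ satisfies $-1<\cos\theta<-\frac{1}{2\sqrt a}$, then $\zeta(\theta)<0$.
   Context: Standing assumptions: $a,b\in\mathbb{R}$ with $b>0$, $1+a+b>0$, $9-27a+b>0$, $2-8a+8a^2+ab\ne0$, $b+1-a\ne0$. Let $f^*(\zeta,\theta)=(\zeta+2\cos\theta)(2\zeta\cos\theta+1)+b\zeta-a(\zeta+2\cos\theta)^3$. Under these assumptions, for each $\theta\in(\pi/2,\pi)$ the polynomial $f^*(\cdot,\theta)$ has exactly one real zero in $(-1,1)$; denote it $w(\theta)$ and set $\zeta(\theta)=1/w(\theta)$ (taken as $\infty$ when $w(\theta)=0$). *)

(* Defs.v *)
From Stdlib Require Export Reals Lra.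
Open Scope R_scope.

Definition fstar (a b zeta theta : R) : R :=
  (zeta + 2 * cos theta) * (2 * zeta * cos theta + 1) + b * zeta
  - a * (zeta + 2 * cos theta) ^ 3.

Definition standing (a b : R) : Prop :=
  0 < b /\ 0 < 1 + a + b /\ 0 < 9 - 27 * a + b /\
  2 - 8 * a + 8 * a ^ 2 + a * b <> 0 /\ b + 1 - a <> 0.

(* Main.v *)
Require Import Defs.
From Stdlib Require Import Reals Lra Psatz.
Open Scope R_scope.

Lemma g0 a b w : 0 < b -> 27*a - 9 < b -> 1/4 < a -> 0 < w -> w < 1 -> 1 < 4*a*w^2 ->
  0 < 1+b+4*w^2-2*w + 4*a*w^2*(2*w-3).
Proof. intros. destruct (Rle_lt_dec a (1/3)).
- assert (0 <= (1/3 - a)*(w^2*(3-2*w))) by (apply Rmult_le_pos; [lra| nra]).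
  nra.
- assert (0 <= (a-1/3)*(27 + 8*w^3 - 12*w^2)) by (apply Rmult_le_pos; [lra| nra]).
  nra.
Qed.
Lemma g1 a b w : 0 < b -> 27*a - 9 < b -> 1/4 < a -> 0 < w -> w < 1 -> 1 < 4*a*w^2 ->
  0 < 1+b+4*w^2-2*w + 4*a*w^2*(2*w-3) + 6*a*w-2*w-a.
Proof. intros.
  replace (1+b+4*w^2-2*w + 4*a*w^2*(2*w-3) + 6*a*w-2*w-a) with (b + (1-2*w)^2*(1 - a*(1-2*w))) by ring.
  destruct (Rle_lt_dec (1 - a*(1-2*w)) 0).
  - assert (0 <= (1-2*w)^2) by nra.
    assert ((1-2*w)^2 <= 1) by nra.
    assert (a*(1-2*w) <= a) by nra.
    assert (1 <= a) by lra.
    assert ((1-2*w)^2*(1 - a*(1-2*w)) >= 1*(1 - a*(1-2*w))) by nra.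
    lra.
  - assert (0 <= (1-2*w)^2*(1 - a*(1-2*w))) by (apply Rmult_le_pos; [apply pow2_ge_0|lra]). lra.
Qed.



Theorem mainTheorem12 (a b theta : R) :
  standing a b ->
  1 / 4 < a -> a < b / 27 + 1 / 3 ->
  PI / 2 < theta < PI ->
  -1 < cos theta < - (1 / (2 * sqrt a)) ->
  forall w : R, -1 < w < 1 -> fstar a b w theta = 0 ->
    w <> 0 /\ / w < 0.
Proof.
  intros [Hb _] Ha Hab _ [Hc1 Hc2] z [Hz1 Hz2] Hf.
  unfold fstar in Hf.
  set (c := cos theta) in *.
  assert (Hs : 0 < sqrt a) by (apply sqrt_lt_R0; lra).
  assert (Hsa : sqrt a * sqrt a = a) by (apply sqrt_sqrt; lra).
  assert (H1 : 1 < - c * (2 * sqrt a)).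
  { assert (Hp : 0 < 2 * sqrt a) by lra.
    assert (E : 1 / (2 * sqrt a) * (2 * sqrt a) = 1) by (field; lra).
    nra. }
  assert (Hk : 1 < 4 * a * (-c)^2).
  { assert (E2 : (- c * (2 * sqrt a))^2 = 4 * (sqrt a * sqrt a) * (-c)^2) by ring.
    rewrite Hsa in E2. rewrite <- E2. nra. }
  set (W := - c) in *.
  assert (HW0 : 0 < W) by (unfold W; assert (0 < 1 / (2 * sqrt a)) by (apply Rdiv_lt_0_compat; lra); lra).
  assert (HW1 : W < 1) by (unfold W; lra).
  assert (Hb' : 27 * a - 9 < b) by lra.
  assert (G0 := g0 a b W Hb Hb' Ha HW0 HW1 Hk).
  assert (G1 := g1 a b W Hb Hb' Ha HW0 HW1 Hk).
  assert (Hzneg : z < 0).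
  { destruct (Rlt_le_dec z 0) as [h|h]; [exact h|exfalso].
    set (q1 := 1+b+4*W^2-2*W + 4*a*W^2*(2*W-3) + 6*a*W-2*W-a) in *.
    set (q0 := 1+b+4*W^2-2*W + 4*a*W^2*(2*W-3)) in *.
    assert (Eq : (z + 2 * c) * (2 * z * c + 1) + b * z - a * (z + 2 * c) ^ 3
       = 2*W*(4*a*W^2-1)*(1-z) + z*((1-z)*q0 + z*q1 + a*z*(1-z))).
    { unfold q1, q0, W; ring. }
    rewrite Eq in Hf.
    assert (P1 : 0 < 2*W*(4*a*W^2-1)*(1-z)).
    { apply Rmult_lt_0_compat; [apply Rmult_lt_0_compat|]; lra. }
    assert (P2 : 0 <= (1-z)*q0 + z*q1 + a*z*(1-z)).
    { assert (0 <= (1-z)*q0) by (apply Rmult_le_pos; lra).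
      assert (0 <= z*q1) by (apply Rmult_le_pos; lra).
      assert (0 <= a*z*(1-z)) by (apply Rmult_le_pos; [apply Rmult_le_pos|]; lra).
      lra. }
    assert (0 <= z*((1-z)*q0 + z*q1 + a*z*(1-z))) by (apply Rmult_le_pos; lra).
    lra. }
  split; [lra|]. apply Rinv_lt_0_compat; exact Hzneg.
Qed.
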